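(* Let $\mathbf{m}=(m_i)_{i\in I}$ with $m_i\in\mathbb{Z}_{\ge0}$, $m=\sum_i m_i$, and let $(\mathbf{i},\mathbf{a})\in I^m\times\mathbb{Z}^m$ be an integral pair such that $a_1\le a_2\le\dots\le a_m$ and $\mathbf{i}$ is a rearrangement of $\mathbf{i}_{\mathbf{m}}$. Let $\pi\in S_m$ be the shortest permutation with $\pi(\mathbf{i})=\mathbf{i}_{\mathbf{m}}$. Then $\pi$ is $(\mathbf{i},\mathbf{a})$-admissible.
   Context: $I$ is the vertex set of a finite simple bipartite graph $I=I_{\bar0}\sqcup I_{\bar1}$ (parities $0,1$); every edge is oriented from its even endpoint to its odd endpoint, and $i\leftarrow j$ means there is an oriented edge from $j$ to $i$. Fix a total order on $I$ in which all even vertices precede all odd ones. $\mathbf{i}_{\mathbf{m}}\in I^m$ is the sequence in which the vertices of $I$ appear in this total order, each $i$ repeated $m_i$ times. $(\mathbf{i},\mathbf{a})$ is integral if each $a_k$ is an integer whose residue mod 2 equals the parity of $i_k$. $S_m$ acts on tuples by $\pi(\mathbf{a})=(a_{\pi^{-1}(1)},\dots,a_{\pi^{-1}(m)})$. Distinct indices $k,l$ are not $(\mathbf{i},\mathbf{a})$-switchable if $i_k\leftarrow i_l$ and $a_k=a_l+1$ (checked for the pair in either order); $\pi$ is $(\mathbf{i},\mathbf{a})$-admissible if for every non-switchable pair $k,l$, $\pi(k),\pi(l)$ are in the same relative order as $k,l$. *)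

(* Defs.v *)
From mathcomp Require Import all_boot all_order all_algebra all_fingroup.
Set Implicit Arguments. Unset Strict Implicit. Unset Printing Implicit Defensive.

(* The vertex set I is 'I_n; the fixed total order on I is the natural order
   of 'I_n.  Parity: p x = false means x is even, p x = true means x is odd. *)

Definition simple_bipartite n (e : rel 'I_n) (p : 'I_n -> bool) : Prop :=
  [/\ symmetric e, irreflexive e & forall x y, e x y -> p x != p y].

Definition evens_first n (p : 'I_n -> bool) : Prop :=
  forall x y : 'I_n, ~~ p x -> p y -> x < y.

(* x <- y : there is an oriented edge from y to x (edges go even -> odd). *)
Definition arrow n (e : rel 'I_n) (p : 'I_n -> bool) (x y : 'I_n) : bool :=
  [&& e x y, p x & ~~ p y].

Definition seq_im n (m : 'I_n -> nat) : seq 'I_n :=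
  flatten [seq nseq (m j) j | j <- enum 'I_n].

Definition act_seq (T : Type) M (s : 'S_M) (x : 'I_M -> T) : seq T :=
  [seq x ((s^-1)%g k) | k <- enum 'I_M].

Definition perm_length M (s : 'S_M) : nat :=
  #|[set q : 'I_M * 'I_M | (q.1 < q.2) && (s q.2 < s q.1)]|.

Definition integral n (p : 'I_n -> bool) M (i : 'I_M -> 'I_n) (a : 'I_M -> int)
  : Prop := forall k, modz (a k) 2 = Posz (p (i k) : nat).

Definition not_switchable n (e : rel 'I_n) (p : 'I_n -> bool) M
  (i : 'I_M -> 'I_n) (a : 'I_M -> int) (k l : 'I_M) : bool :=
  (k != l) &&
  ((arrow e p (i k) (i l) && (a k == a l + 1)%R) ||
   (arrow e p (i l) (i k) && (a l == a k + 1)%R)).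

Definition admissible n (e : rel 'I_n) (p : 'I_n -> bool) M
  (i : 'I_M -> 'I_n) (a : 'I_M -> int) (s : 'S_M) : Prop :=
  forall k l : 'I_M, not_switchable e p i a k l -> (k < l) = (s k < s l).

(* Main.v *)
Require Import Defs.
From mathcomp Require Import all_boot all_order all_algebra all_fingroup.
Import Order.TTheory GRing.Theory Num.Theory.

Lemma flat_pairwise n (f : 'I_n -> nat) (s : seq 'I_n) :
  pairwise (fun x y : 'I_n => (x < y)%N) s ->
  pairwise (fun x y : 'I_n => (x <= y)%N) (flatten [seq nseq (f j) j | j <- s]).
Proof.
elim: s => [|j s IH] //= /andP[Hj Hs].
rewrite pairwise_cat IH // andbT; apply/andP; split.
  apply/allrelP => x y /nseqP[-> _] /flatten_mapP[z zs /nseqP[-> _]].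
  by apply: ltnW; move/allP: Hj; apply.
elim: (f j) => [|k IHk] //=; rewrite IHk andbT.
by apply/allP => y /nseqP[-> _].
Qed.

Lemma seq_im_sorted n (m : 'I_n -> nat) :
  sorted (fun x y : 'I_n => (x <= y)%N) (seq_im m).
Proof.
rewrite sorted_pairwise; last by move=> x y z; apply: leq_trans.
apply: flat_pairwise.
have : sorted ltn (map val (enum 'I_n)) by rewrite val_enum_ord iota_ltn_sorted.
rewrite sorted_map sorted_pairwise //; move=> x y z /=; apply: ltn_trans.
Qed.

Theorem lemma5p8 (n : nat) (e : rel 'I_n) (p : 'I_n -> bool)
  (m : 'I_n -> nat) (i : 'I_(\sum_(j < n) m j) -> 'I_n)
  (a : 'I_(\sum_(j < n) m j) -> int) (pi : 'S_(\sum_(j < n) m j)) :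
  simple_bipartite e p ->
  evens_first p ->
  integral p i a ->
  (forall k l : 'I_(\sum_(j < n) m j), k <= l -> (a k <= a l)%R) ->
  perm_eq [seq i k | k <- enum 'I_(\sum_(j < n) m j)] (seq_im m) ->
  act_seq pi i = seq_im m ->
  (forall s : 'S_(\sum_(j < n) m j),
      act_seq s i = seq_im m -> perm_length pi <= perm_length s) ->
  admissible e p i a pi.
Proof.
move=> _ Hev _ Ha _ Hact _.
set M := \sum_(j < n) m j in i a pi Ha Hact *.
have Hsz : size (seq_im m) = M by rewrite -Hact size_map size_enum_ord.
have Hnth : forall k : 'I_M, nth (i k) (seq_im m) (pi k) = i k.
  move=> k; rewrite -Hact (nth_map (pi k)) ?size_enum_ord //.
  by rewrite nth_ord_enum permK.
have Hmono : forall k l : 'I_M, (pi k <= pi l)%N -> (i k <= i l)%N.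
  move=> k l Hkl.
  have := sorted_leq_nth (fun (y x z : 'I_n) => @leq_trans y x z) (fun x : 'I_n => leqnn x)
    (i k) (@seq_im_sorted _ m).
  move=> /(_ (pi k) (pi l)); rewrite !inE Hsz !ltn_ord => /(_ isT isT Hkl).
  rewrite Hnth (set_nth_default (i l) (i k)) ?Hnth // Hsz ltn_ord.
  by [].
have key : forall k l : 'I_M, arrow e p (i k) (i l) -> a k = (a l + 1)%R ->
    (k < l) = false /\ (pi k < pi l) = false.
  move=> k l /and3P[_ pk npl] Hakl.
  have Hlt := Hev _ _ npl pk.
  split.
    apply: negbTE; rewrite -leqNgt; apply: contraTT Hlt => Hlk.
    rewrite -ltnNge in Hlk.
    have := Ha k l (ltnW Hlk); rewrite Hakl.
    by rewrite gerDl leNgt ltr01.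
  apply: negbTE; rewrite -leqNgt; apply: contraTT Hlt => Hlk.
  rewrite -ltnNge in Hlk. rewrite -leqNgt; apply: Hmono; exact: ltnW.
move=> k l /andP[Hkl /orP[/andP[Har /eqP Heq]|/andP[Har /eqP Heq]]].
  by have [-> ->] := key k l Har Heq.
have [H1 H2] := key l k Har Heq.
have L1 : (k <= l)%N by rewrite leqNgt H1.
have L2 : (pi k <= pi l)%N by rewrite leqNgt H2.
rewrite !ltn_neqAle L1 L2 !andbT.
by rewrite (inj_eq val_inj) (inj_eq val_inj) (inj_eq perm_inj).
Qed.
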